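(* Let $D=(V,E;s,t)$, $N$, and $\mathscr{B}$ be as in the context. For every jump $Q\in\mathscr{J}$ there exists either an $s$-$t$ path $P$ with $\mathscr{J}_P=\{Q\}$ or a cycle $C$ with $\mathscr{J}_C=\{Q\}$.
   Context: $D=(V,E;s,t)$ is a directed network with unit arc capacities (parallel arcs allowed), $N\subseteq E$, and every arc lies on some $s$-$t$ path and every $s$-$t$ path contains an arc of $N$. A path is a set of arcs joining a sequence of distinct vertices along the same direction. Two paths are disjoint on $N$ if they share no arc of $N$. Fix a maximum-cardinality family $\mathscr{B}$ of $s$-$t$ paths pairwise disjoint on $N$; a $\mathscr{B}$-vertex is a vertex on some path of $\mathscr{B}$. A $u$-$v$ jump is a $u$-$v$ path whose end vertices $u,v$ are $\mathscr{B}$-vertices, none of whose intermediate vertices is a $\mathscr{B}$-vertex, and which is not a single arc of a path of $\mathscr{B}$; $(u,v)$ is its jump pair; $\mathscr{J}$ is the set of all jumps. For an $s$-$t$ path or a cycle $W$, cut $W$ at each of its $\mathscr{B}$-vertices into consecutive pieces, each going from a $\mathscr{B}$-vertex to the next $\mathscr{B}$-vertex along $W$; $\mathscr{J}_W$ is the set of those pieces that are jumps (i.e. are not single arcs of paths of $\mathscr{B}$), so that $W=P_0*Q_1*P_1*\cdots*Q_r*P_r$ with $P_i$ (possibly empty) subpaths of paths of $\mathscr{B}$ and $\mathscr{J}_W=\{Q_1,\dots,Q_r\}$. *)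

(* Defs.v *)
(* Directed multigraph: arcs are elements of a finite type E,
   each arc e goes from [src e] to [tgt e] (parallel arcs allowed). *)
From mathcomp Require Import all_boot.
Set Implicit Arguments. Unset Strict Implicit. Unset Printing Implicit Defensive.

Section Network.
Variables (V E : finType) (src tgt : E -> V).

Fixpoint walk (u v : V) (p : seq E) : bool :=
  match p with
  | [::] => u == v
  | e :: p' => (src e == u) && walk (tgt e) v p'
  end.

Definition verts (u : V) (p : seq E) : seq V := u :: map tgt p.

Definition is_path (u v : V) (p : seq E) : bool := walk u v p && uniq (verts u p).

(* cycle: a nonempty closed walk whose vertices (other than the repeated
   start/end) are pairwise distinct *)
Definition is_cycle (c : seq E) : bool :=
  if c is e :: _ then walk (src e) (src e) c && uniq (map tgt c) else false.

Definition interior (u : V) (p : seq E) : seq V := behead (belast u (map tgt p)).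

Variables (s t : V) (N : {set E}).

Definition disjoint_on_N (P1 P2 : seq E) : bool :=
  all (fun e => (e \in N) ==> (e \notin P2)) P1.

Definition N_disjoint_family (B : seq (seq E)) : bool :=
  all (is_path s t) B && pairwise disjoint_on_N B.

Variable B : seq (seq E).

Definition Bvert (x : V) : bool := has (fun P => x \in verts s P) B.

Definition single_B_arc (q : seq E) : bool :=
  has (fun P => has (fun e => q == [:: e]) P) B.

Definition is_jump (u v : V) (q : seq E) : bool :=
  [&& q != [::], is_path u v q, Bvert u, Bvert v,
      all (fun x => ~~ Bvert x) (interior u q) & ~~ single_B_arc q].

(* Cutting a walk at its B-vertices: the pieces from a B-vertex to the next
   B-vertex.  [started] records whether a B-vertex has been met already. *)
Fixpoint pieces_aux (started : bool) (acc : seq E) (p : seq E) : seq (seq E) :=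
  match p with
  | [::] => [::]
  | e :: p' =>
      if Bvert (tgt e) then
        (if started then rcons acc e :: pieces_aux true [::] p'
         else pieces_aux true [::] p')
      else pieces_aux started (rcons acc e) p'
  end.

Definition pieces (u : V) (p : seq E) : seq (seq E) := pieces_aux (Bvert u) [::] p.

Definition path_jumps (W : seq E) : seq (seq E) :=
  [seq q <- pieces s W | ~~ single_B_arc q].

Definition cycle_jumps (C : seq E) : seq (seq E) :=
  let C' := rot (find (fun e => Bvert (src e)) C) C in
  if C' is e :: _ then [seq q <- pieces (src e) C' | ~~ single_B_arc q] else [::].

End Network.

(* Main.v *)
Require Import Defs.
From mathcomp Require Import all_boot.
Set Implicit Arguments. Unset Strict Implicit. Unset Printing Implicit Defensive.


Section Aux.
Variables (V E : finType) (src tgt : E -> V) (s : V) (B : seq (seq E)).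

Lemma walk_cat x y z p1 p2 :
  walk src tgt x y p1 -> walk src tgt y z p2 -> walk src tgt x z (p1 ++ p2).
Proof.
elim: p1 x => [|e p IH] x /=; first by move/eqP->.
by case/andP=> -> /IH h /h.
Qed.

Lemma walk_last x y p : walk src tgt x y p -> last x (map tgt p) = y.
Proof.
elim: p x => [|e p IH] x /=; first by move/eqP.
by case/andP=> _ /IH.
Qed.

Lemma verts_cat x p1 p2 : verts tgt x (p1 ++ p2) = verts tgt x p1 ++ map tgt p2.
Proof. by rewrite /verts map_cat. Qed.

Lemma walk_split x y p (P : pred V) : walk src tgt x y p ->
  has P (verts tgt x p) -> exists p1 p2 z, [/\ p = p1 ++ p2, walk src tgt x z p1,
   walk src tgt z y p2, P z & forall w, w \in verts tgt x p1 -> P w -> w = z].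
Proof.
elim: p x => [|e p IH] x /=.
  move/eqP=> ->; rewrite orbF => Py.
  exists [::], [::], y; split=> //=.
  by move=> w; rewrite inE => /eqP.
case/andP=> /eqP hs hw; case Px: (P x) => /= h.
  exists [::], (e :: p), x; split=> //=.
  by rewrite hs eqxx.
  by move=> w; rewrite inE => /eqP.
have [p1 [p2 [z [-> w1 w2 Pz hz]]]] := IH _ hw h.
exists (e :: p1), p2, z; split=> //=; first by rewrite hs eqxx w1.
move=> w; rewrite in_cons => /orP [/eqP -> | /hz //]; by rewrite Px.
Qed.

Lemma uniq_catI (T : eqType) (a b : seq T) : uniq a -> uniq b ->
  (forall x, x \in a -> x \in b -> False) -> uniq (a ++ b).
Proof.
move=> ua ub H; rewrite cat_uniq ua ub andbT /=.
by apply/hasPn => x xb; apply/negP => xa; exact: H x xa xb.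
Qed.

Lemma pieces_B A rest : (forall e, e \in A -> Bvert tgt s B (tgt e)) ->
  pieces_aux tgt s B true [::] (A ++ rest) =
  map (fun e => [:: e]) A ++ pieces_aux tgt s B true [::] rest.
Proof.
elim: A => [|e A IH] //= H.
rewrite H ?mem_head // IH // => e' he'; apply: H; by rewrite in_cons he' orbT.
Qed.

Lemma pieces_Q Q' e acc rest : all (fun e => ~~ Bvert tgt s B (tgt e)) Q' ->
  Bvert tgt s B (tgt e) ->
  pieces_aux tgt s B true acc (rcons Q' e ++ rest) =
  rcons (acc ++ Q') e :: pieces_aux tgt s B true [::] rest.
Proof.
elim: Q' acc => [|e' Q' IH] acc /=; first by move=> _ ->; rewrite cats0.
case/andP=> /negbTE -> h he; rewrite IH //.
by rewrite cat_rcons.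
Qed.

Lemma verts_split x z p1 p2 : walk src tgt x z p1 ->
  verts tgt x (p1 ++ p2) = belast x (map tgt p1) ++ verts tgt z p2.
Proof.
move=> w; rewrite verts_cat -(walk_last w) /verts lastI cat_rcons //.
Qed.

End Aux.


Theorem lemma3 (V E : finType) (src tgt : E -> V) (s t : V) (N : {set E})
  (hE : forall e : E, exists P, is_path src tgt s t P /\ e \in P)
  (hN : forall P, is_path src tgt s t P -> has (fun e => e \in N) P)
  (B : seq (seq E))
  (hB : N_disjoint_family src tgt s t N B)
  (hmax : forall B', N_disjoint_family src tgt s t N B' -> size B' <= size B)
  (u v : V) (Q : seq E) (hQ : is_jump src tgt s B u v Q) :
  (exists P, is_path src tgt s t P /\
     forall q, (q \in path_jumps tgt s B P) = (q == Q)) \/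
  (exists C, is_cycle src tgt C /\
     forall q, (q \in cycle_jumps src tgt s B C) = (q == Q)).
Proof.
clear hE hN hmax.
set BV := Bvert tgt s B.
have inBP : forall P e, P \in B -> e \in P -> BV (tgt e) && single_B_arc B [:: e].
  move=> P e PB eP; apply/andP; split.
    by apply/hasP; exists P => //; rewrite /verts in_cons map_f ?orbT.
  by apply/hasP; exists P => //; apply/hasP; exists e.
case/andP: hB => /allP hBp _.
case/and5P: hQ => Qn /andP [wQ uQ] Bu Bv /andP [intQ sQ].
case/lastP: Q Qn wQ uQ intQ sQ => [//|Q' eq] _ wQ uQ intQ sQ.
have teq : tgt eq = v by have := walk_last wQ; rewrite map_rcons last_rcons.
move: intQ; rewrite /interior map_rcons belast_rcons /= => intQ.
have memQ : forall x, x \in map tgt (rcons Q' eq) -> x = v \/ ~~ BV x.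
  move=> x; rewrite map_rcons mem_rcons in_cons => /orP [/eqP ->|]; first by left.
  by move=> xQ; right; exact: (allP intQ).
have vQ' : v \notin map tgt Q'.
  move: uQ; rewrite /verts map_rcons teq /= rcons_uniq.
  by case/andP=> _ /andP [].
have uQu : uniq (map tgt (rcons Q' eq)) by move: uQ; rewrite /verts /= => /andP [].
have Bs : BV s.
  case/hasP: (Bu) => P PB _; apply/hasP; exists P => //; exact: mem_head.
case/hasP: (Bu) => P1 P1B uP1.
case/andP: (hBp _ P1B) => wP1 uP1u.
have hu : has (pred1 u) (verts tgt s P1) by rewrite has_pred1.
have [A1 [R1 [z [eP1 wA1 _ /eqP zu _]]]] := walk_split wP1 hu.
subst z.
have A1B : forall e, e \in A1 -> BV (tgt e) && single_B_arc B [:: e].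
  by move=> e eA; apply: (inBP P1) => //; rewrite eP1 mem_cat eA.
have uA1 : uniq (verts tgt s A1) by move: uP1u; rewrite eP1 verts_cat cat_uniq => /andP [].
have BA1 : forall x, x \in verts tgt s A1 -> BV x.
  move=> x; rewrite in_cons => /orP [/eqP -> //| /mapP [e eA ->]].
  by case/andP: (A1B e eA).
case/hasP: (Bv) => P2 P2B vP2.
case/andP: (hBp _ P2B) => wP2 uP2u.
have hv : has (pred1 v) (verts tgt s P2) by rewrite has_pred1.
have [L2 [C2 [z [eP2 wL2 wC2 /eqP zv _]]]] := walk_split wP2 hv.
subst z.
have C2B : forall e, e \in C2 -> BV (tgt e) && single_B_arc B [:: e].
  by move=> e eA; apply: (inBP P2) => //; rewrite eP2 mem_cat eA orbT.
have uC2 : uniq (verts tgt v C2).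
  move: uP2u; rewrite eP2 (verts_split _ wL2) cat_uniq.
  by case/and3P.
have filt : forall A C, (forall e, e \in A -> BV (tgt e) && single_B_arc B [:: e]) ->
    (forall e, e \in C -> BV (tgt e) && single_B_arc B [:: e]) ->
    forall q, (q \in [seq q <- pieces_aux tgt s B true [::] (rcons Q' eq ++ A ++ C)
         | ~~ single_B_arc B q]) = (q == rcons Q' eq).
  move=> A C hA hC q.
  rewrite pieces_Q; first last.
    by rewrite teq; exact: Bv.
    by move: intQ; rewrite all_map.
  rewrite /= sQ in_cons.
  rewrite pieces_B; last by move=> e /hA /andP [].
  rewrite -[C]cats0 pieces_B /=; last by move=> e /hC /andP [].
  rewrite cats0 !filter_cat.
  have H : forall D, (forall e, e \in D -> BV (tgt e) && single_B_arc B [:: e]) ->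
      [seq q <- map (fun e => [:: e]) D | ~~ single_B_arc B q] = [::].
    move=> D hD; apply/eqP; rewrite -[_ == _]negbK -has_filter; apply/hasPn.
    by move=> x /mapP [e eD ->]; rewrite negbK; case/andP: (hD e eD).
  by rewrite (H A hA) (H C hC) /= orbF.
have BC2 : forall x, x \in map tgt C2 -> BV x.
  by move=> x /mapP [e eC ->]; case/andP: (C2B e eC).
have vC2 : v \notin map tgt C2 by move: uC2; rewrite /verts /= => /andP [].
case: (boolP (has (fun x => x \in verts tgt s A1) (verts tgt v C2))) => [hit|nohit].
  right.
  have [C2a [C2b [w [eC2 wC2a _ wA1' hw]]]] := walk_split wC2 hit.
  have hw1 : has (pred1 w) (verts tgt s A1) by rewrite has_pred1.
  have [A1a [A1b [w' [eA1 wA1a wA1b /eqP ww _]]]] := walk_split wA1 hw1.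
  subst w'.
  have [e0 [Q0 eQ]] : exists e0 Q0, rcons Q' eq = e0 :: Q0.
    by case: (Q') => [|a l] /=; [exists eq, [::] | exists a, (rcons l eq)].
  have wC : walk src tgt u u (rcons Q' eq ++ C2a ++ A1b) := walk_cat wQ (walk_cat wC2a wA1b).
  have su : src e0 = u by move: wC; rewrite eQ /= => /andP [/eqP].
  have uA1' : uniq (verts tgt s A1a ++ map tgt A1b) by rewrite -verts_cat -eA1.
  have uC2' : uniq (verts tgt v C2a ++ map tgt C2b) by rewrite -verts_cat -eC2.
  have wA1b' : w \notin map tgt A1b.
    move: uA1'; rewrite cat_uniq => /and3P [_ /hasPn h _]; apply/negP => /h.
    by rewrite /verts -(walk_last wA1a) mem_last.
  have BA1b : forall x, x \in map tgt A1b -> BV x.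
    move=> x /mapP [e eC ->]; have eA : e \in A1 by rewrite eA1 mem_cat eC orbT.
    by case/andP: (A1B e eA).
  have BC2a : forall x, x \in map tgt C2a -> BV x.
    move=> x /mapP [e eC ->]; have eA : e \in C2 by rewrite eC2 mem_cat eC.
    by case/andP: (C2B e eA).
  have A1bA1 : forall x, x \in map tgt A1b -> x \in verts tgt s A1.
    by move=> x xA; rewrite eA1 verts_cat mem_cat xA orbT.
  have uC2a : uniq (v :: map tgt C2a) by move: uC2'; rewrite cat_uniq => /andP [].
  have uC : uniq (map tgt (rcons Q' eq ++ C2a ++ A1b)).
    rewrite !map_cat; apply: uniq_catI => //.
      apply: uniq_catI.
      - by case/andP: uC2a.
      - by move: uA1'; rewrite cat_uniq => /and3P [].
      - move=> x xC xA; have xv : x \in verts tgt v C2a by rewrite in_cons xC orbT.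
        have xw := hw x xv (A1bA1 _ xA).
        by move: xA; rewrite xw => xA; rewrite xA in wA1b'.
    move=> x xQ; rewrite mem_cat => /orP [xC|xA]; case: (memQ x xQ) => [xv|nB].
    - by move: uC2a; rewrite /= -xv xC.
    - by move: nB; rewrite (BC2a x xC).
    - have vw := hw v (mem_head _ _) (A1bA1 _ (eq_ind _ (fun y => y \in _) xA _ xv)).
      by move: wA1b'; rewrite -vw -xv xA.
    - by move: nB; rewrite (BA1b x xA).
  exists (rcons Q' eq ++ C2a ++ A1b); split.
    rewrite /is_cycle eQ /= su eqxx /=; move: wC uC; rewrite eQ /= su eqxx /= => -> ->.
    done.
  have f0 : find (fun e => Bvert tgt s B (src e)) (rcons Q' eq ++ C2a ++ A1b) = 0.
    by rewrite eQ /= su Bu.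
  rewrite /cycle_jumps f0 rot0.
  case E0: (rcons Q' eq ++ C2a ++ A1b) => [|e1 C1]; first by rewrite eQ in E0.
  have se1 : src e1 = u by move: E0; rewrite eQ => -[<- _].
  rewrite /pieces se1 Bu -E0; apply: filt => e eC.
    by apply: C2B; rewrite eC2 mem_cat eC.
  by apply: A1B; rewrite eA1 mem_cat eC orbT.
left; exists (A1 ++ rcons Q' eq ++ C2); split.
  rewrite /is_path (walk_cat wA1 (walk_cat wQ wC2)) andTb.
  rewrite verts_cat map_cat; apply: uniq_catI => //.
    apply: uniq_catI => //; first by case/andP: uC2.
    move=> x xQ xC; case: (memQ x xQ) => [xv|nB].
      by move: vC2; rewrite -xv xC.
    by move: nB; rewrite (BC2 x xC).
  have nh : forall x, x \in verts tgt s A1 -> x \in verts tgt v C2 -> False.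
    move=> x xA xC; move/hasPn: nohit => /(_ x xC); by rewrite xA.
  move=> x xA; rewrite mem_cat => /orP [xQ|xC].
    case: (memQ x xQ) => [xv|nB].
      by apply: (nh x xA); rewrite xv mem_head.
    by move: nB; rewrite (BA1 x xA).
  by apply: (nh x xA); rewrite in_cons xC orbT.
move=> q; rewrite /path_jumps /pieces (Bs : Bvert tgt s B s = true) pieces_B; last by move=> e /A1B /andP [].
rewrite filter_cat.
have -> : [seq q <- map (fun e => [:: e]) A1 | ~~ single_B_arc B q] = [::].
  apply/eqP; rewrite -[_ == _]negbK -has_filter; apply/hasPn.
  by move=> x /mapP [e eD ->]; rewrite negbK; case/andP: (A1B e eD).
exact: (filt [::] C2 _ C2B).
Qed.
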